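(* Let $\mathcal{X}\subseteq\mathbb{R}^d$ be a nonempty closed convex bounded set, $R\ge\max_{x,y\in\mathcal{X}}\|x-y\|$, and let $F\colon\mathcal{X}\to\mathbb{R}^d$ be monotone. Let $x_0,x_1,\dots,x_T\in\mathcal{X}$ be the iterates of Algorithm AdaPEG (described in the context), $\bar x_T=\frac1T\sum_{t=1}^Tx_t$, and $\xi_t:=F(x_t)-\widehat{F(x_t)}$. Then \[T\cdot\mathrm{Err}(\bar x_T)\le\sup_{y\in\mathcal{X}}\left(\sum_{t=1}^T\langle\widehat{F(x_t)},x_t-y\rangle\right)+R\left\|\sum_{t=1}^T\xi_t\right\|+\sum_{t=1}^T\langle\xi_t,x_t-x_0\rangle.\]
   Context: $\|\cdot\|$ is the Euclidean norm. Monotone: $\langle F(x)-F(y),x-y\rangle\ge0$ for all $x,y\in\mathcal{X}$. $\widehat{F(x_t)}\in\mathbb{R}^d$ denotes the (stochastic) oracle answer returned when querying $F$ at $x_t$. $\mathrm{Err}(x)=\sup_{y\in\mathcal{X}}\langle F(y),x-y\rangle$. Algorithm AdaPEG: $x_0=z_0\in\mathcal{X}$, $\gamma_0\ge0$, $\eta>0$. For $t=1,\dots,T$: $x_t=\arg\min_{u\in\mathcal{X}}\{\langle\widehat{F(x_{t-1})},u\rangle+\tfrac12\gamma_{t-1}\|u-z_{t-1}\|^2\}$; $\gamma_t=\frac1\eta\sqrt{\eta^2\gamma_0^2+\sum_{s=1}^t\|\widehat{F(x_s)}-\widehat{F(x_{s-1})}\|^2}$; $z_t=\arg\min_{u\in\mathcal{X}}\{\langle\widehat{F(x_t)},u\rangle+\tfrac12\gamma_{t-1}\|u-z_{t-1}\|^2+\tfrac12(\gamma_t-\gamma_{t-1})\|u-x_t\|^2\}$.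 *)

(* Defs.v *)
From HB Require Import structures.
From mathcomp Require Import all_boot all_order all_algebra.
From mathcomp Require Import all_classical all_reals all_analysis.
Set Implicit Arguments. Unset Strict Implicit. Unset Printing Implicit Defensive.
Import Order.TTheory GRing.Theory Num.Theory.
Import numFieldNormedType.Exports.
Local Open Scope classical_set_scope.
Local Open Scope ring_scope.

Definition dotp (R : realType) (d : nat) (u v : 'rV[R]_d) : R :=
  \sum_(i < d) u ord0 i * v ord0 i.

Definition enorm (R : realType) (d : nat) (u : 'rV[R]_d) : R :=
  Num.sqrt (dotp u u).

Definition convex_setR (R : realType) (d : nat) (X : set 'rV[R]_d) : Prop :=
  forall x y, X x -> X y -> forall l : R, 0 <= l -> l <= 1 ->
    X (l *: x + (1 - l) *: y).

Definition monotone_on (R : realType) (d : nat) (X : set 'rV[R]_d)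
  (F : 'rV[R]_d -> 'rV[R]_d) : Prop :=
  forall x y, X x -> X y -> 0 <= dotp (F x - F y) (x - y).

Definition is_argmin (R : realType) (d : nat) (X : set 'rV[R]_d)
  (f : 'rV[R]_d -> R) (u : 'rV[R]_d) : Prop :=
  X u /\ forall v, X v -> f u <= f v.

Definition Err (R : realType) (d : nat) (X : set 'rV[R]_d)
  (F : 'rV[R]_d -> 'rV[R]_d) (x : 'rV[R]_d) : \bar R :=
  ereal_sup [set ((dotp (F y) (x - y))%:E) | y in X].

(* The AdaPEG iteration, with ghat t the oracle answer at x t. *)
Definition AdaPEG (R : realType) (d : nat) (X : set 'rV[R]_d)
  (eta : R) (T : nat) (x z ghat : nat -> 'rV[R]_d) (gamma : nat -> R) : Prop :=
  [/\ x 0%N = z 0%N, X (z 0%N), 0 <= gamma 0%N, 0 < eta &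
   forall t, (1 <= t <= T)%N ->
   [/\ is_argmin X (fun u => dotp (ghat t.-1) u
                       + 2^-1 * gamma t.-1 * (enorm (u - z t.-1)) ^+ 2) (x t),
       gamma t = eta^-1 * Num.sqrt (eta ^+ 2 * gamma 0%N ^+ 2
                   + \sum_(1 <= s < t.+1) (enorm (ghat s - ghat s.-1)) ^+ 2) &
       is_argmin X (fun u => dotp (ghat t) u
                       + 2^-1 * gamma t.-1 * (enorm (u - z t.-1)) ^+ 2
                       + 2^-1 * (gamma t - gamma t.-1) * (enorm (u - x t)) ^+ 2)
                 (z t)]].

(* Main.v *)
Require Import Defs.
From HB Require Import structures.
From mathcomp Require Import all_boot all_order all_algebra.
From mathcomp Require Import all_classical all_reals all_analysis.
Import Order.TTheory GRing.Theory Num.Theory.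
Import numFieldNormedType.Exports.
From mathcomp Require Import lra.
Local Open Scope classical_set_scope.
Local Open Scope ring_scope.

Section S.
Variables (R : realType) (d : nat).
Implicit Types u v w : 'rV[R]_d.

Lemma dotpDl u v w : dotp (u + v) w = dotp u w + dotp v w.
Proof. by rewrite /dotp -big_split; apply: eq_bigr => i _; rewrite mxE mulrDl. Qed.
Lemma dotpNl u w : dotp (- u) w = - dotp u w.
Proof. by rewrite /dotp -sumrN; apply: eq_bigr => i _; rewrite mxE mulNr. Qed.
Lemma dotpBl u v w : dotp (u - v) w = dotp u w - dotp v w.
Proof. by rewrite dotpDl dotpNl. Qed.
Lemma dotpC u v : dotp u v = dotp v u.
Proof. by rewrite /dotp; apply: eq_bigr => i _; rewrite mulrC. Qed.
Lemma dotpDr u v w : dotp w (u + v) = dotp w u + dotp w v.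
Proof. by rewrite !(dotpC w) dotpDl. Qed.
Lemma dotpBr u v w : dotp w (u - v) = dotp w u - dotp w v.
Proof. by rewrite !(dotpC w) dotpBl. Qed.
Lemma dotpZl (a : R) u w : dotp (a *: u) w = a * dotp u w.
Proof. by rewrite /dotp mulr_sumr; apply: eq_bigr => i _; rewrite mxE mulrA. Qed.
Lemma dotpZr (a : R) u w : dotp w (a *: u) = a * dotp w u.
Proof. by rewrite !(dotpC w) dotpZl. Qed.
Lemma dotp_suml (I : Type) (r : seq I) (P : pred I) (f : I -> 'rV[R]_d) w :
  dotp (\sum_(i <- r | P i) f i) w = \sum_(i <- r | P i) dotp (f i) w.
Proof.
elim/big_rec2: _ => [|i y1 y2 _ <-]; last by rewrite dotpDl.
by rewrite /dotp big1 // => i _; rewrite mxE mul0r.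
Qed.
Lemma dotp_sumr (I : Type) (r : seq I) (P : pred I) (f : I -> 'rV[R]_d) w :
  dotp w (\sum_(i <- r | P i) f i) = \sum_(i <- r | P i) dotp w (f i).
Proof. by rewrite dotpC dotp_suml; apply: eq_bigr => i _; rewrite dotpC. Qed.
Lemma dotp_ge0 u : 0 <= dotp u u.
Proof. by apply: sumr_ge0 => i _; rewrite -expr2 sqr_ge0. Qed.
Lemma dotp_eq0 u : dotp u u = 0 -> forall w, dotp u w = 0.
Proof.
move=> h w; rewrite /dotp big1 // => i _.
have := @psumr_eq0P R _ xpredT (fun i => u ord0 i * u ord0 i).
move=> /(_ (fun i _ => ltac:(by rewrite -expr2 sqr_ge0)) h i isT) /eqP.
by rewrite mulf_eq0 orbb => /eqP ->; rewrite mul0r.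
Qed.

Lemma CS u v : dotp u v <= enorm u * enorm v.
Proof.
rewrite /enorm; set a := Num.sqrt (dotp u u); set b := Num.sqrt (dotp v v).
have a0 : 0 <= a by apply: sqrtr_ge0.
have b0 : 0 <= b by apply: sqrtr_ge0.
have ea : a ^+ 2 = dotp u u by rewrite sqr_sqrtr // dotp_ge0.
have eb : b ^+ 2 = dotp v v by rewrite sqr_sqrtr // dotp_ge0.
have [a0e|anz] := eqVneq a 0.
  by rewrite a0e mul0r dotp_eq0 // -ea a0e expr0n.
have [b0e|bnz] := eqVneq b 0.
  by rewrite b0e mulr0 dotpC dotp_eq0 // -eb b0e expr0n.
have h := dotp_ge0 (b *: u - a *: v).
rewrite !(dotpBl, dotpBr, dotpZl, dotpZr) -ea -eb (dotpC v u) in h.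
have ab : 0 < a * b by rewrite mulr_gt0 // lt0r ?anz ?bnz.
rewrite -(ler_pM2l ab).
nra.
Qed.
End S.

Theorem lemmaB1 (R : realType) (d : nat) (X : set 'rV[R]_d) (Rd : R)
  (F : 'rV[R]_d -> 'rV[R]_d) (eta : R) (T : nat)
  (x z ghat : nat -> 'rV[R]_d) (gamma : nat -> R) :
  X !=set0 -> closed X -> bounded_set X -> convex_setR X ->
  (forall a b, X a -> X b -> enorm (a - b) <= Rd) ->
  monotone_on X F ->
  AdaPEG X eta T x z ghat gamma ->
  (0 < T)%N ->
  let xbar := (T%:R)^-1 *: \sum_(1 <= t < T.+1) x t in
  let xi := fun t => F (x t) - ghat t in
  ((T%:R)%:E * Err X F xbar <=
    ereal_sup [set ((\sum_(1 <= t < T.+1) dotp (ghat t) (x t - y))%:E) | y in X]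
    + (Rd * enorm (\sum_(1 <= t < T.+1) xi t))%:E
    + (\sum_(1 <= t < T.+1) dotp (xi t) (x t - x 0%N))%:E)%E.
Proof.
move=> [y0 Xy0] _ _ _ HR Hmono [Hx0 Hz0 _ _ Hstep] T0.
cbv zeta.
set xbar := (T%:R)^-1 *: \sum_(1 <= t < T.+1) x t.
set xi := fun t => F (x t) - ghat t.
have Xx : forall t, (1 <= t <= T)%N -> X (x t).
  by move=> t /Hstep [[]].
have X0 : X (x 0%N) by rewrite Hx0.
set G := fun y => \sum_(1 <= t < T.+1) dotp (ghat t) (x t - y).
set B := Rd * enorm (\sum_(1 <= t < T.+1) xi t).
set C := \sum_(1 <= t < T.+1) dotp (xi t) (x t - x 0%N).
have key : forall y, X y -> T%:R * dotp (F y) (xbar - y) <= G y + B + C.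
  move=> y Xy.
  have c1 : T%:R * dotp (F y) (xbar - y) = \sum_(1 <= t < T.+1) dotp (F y) (x t - y).
    under eq_bigr => t _ do rewrite dotpBr.
    rewrite sumrB -dotp_sumr sumr_const_nat subn1 /= dotpBr mulrBr /xbar dotpZr.
    rewrite mulrA mulfV ?pnatr_eq0 -?lt0n // mul1r mulr_natl //.
  have c2 : \sum_(1 <= t < T.+1) dotp (F y) (x t - y) <=
            \sum_(1 <= t < T.+1) dotp (F (x t)) (x t - y).
    apply: ler_sum_nat => t /andP [t1 tT].
    have := Hmono _ _ (Xx t _) Xy; rewrite t1 -ltnS tT => /(_ isT).
    by rewrite dotpBl subr_ge0.
  have c3 : \sum_(1 <= t < T.+1) dotp (F (x t)) (x t - y) =
            G y + \sum_(1 <= t < T.+1) dotp (xi t) (x t - y).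
    rewrite /G -big_split /=; apply: eq_bigr => t _.
    by rewrite -dotpDl /xi /= [ghat t + _]addrC subrK.
  have c4 : \sum_(1 <= t < T.+1) dotp (xi t) (x t - y) =
            C + dotp (\sum_(1 <= t < T.+1) xi t) (x 0%N - y).
    rewrite /C dotp_suml -big_split /=; apply: eq_bigr => t _.
    by rewrite -dotpDr addrA subrK.
  have c5 : dotp (\sum_(1 <= t < T.+1) xi t) (x 0%N - y) <= B.
    apply: le_trans (CS _ _ _ _) _; rewrite /B mulrC.
    by apply: ler_wpM2r; [apply: sqrtr_ge0 | apply: HR].
  rewrite c1; apply: le_trans c2 _; rewrite c3 c4.
  by rewrite -[G y + B + C]addrA lerD2l [B + C]addrC lerD2l.
have Gub : forall y, X y -> ((G y)%:E <= ereal_sup [set (G y)%:E | y in X])%E.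
  by move=> y Xy; apply: ereal_sup_ubound; exists y.
have -> : ereal_sup [set ((\sum_(1 <= t < T.+1) dotp (ghat t) (x t - y))%:E) | y in X]
  = ereal_sup [set (G y)%:E | y in X] by [].
move: Gub.
case: (ereal_sup _) => [s| |] Gub.
- rewrite -!EFinD.
  have hT : (0 < T%:R :> R) by rewrite ltr0n.
  have E1 : (Err X F xbar <= (T%:R^-1 * (s + B + C))%:E)%E.
    apply: ge_ereal_sup => _ [y Xy <-]; rewrite lee_fin.
    rewrite ler_pdivlMl //; apply: le_trans (key y Xy) _.
    by rewrite lerD2r lerD2r -lee_fin; apply: Gub.
  apply: le_trans (lee_wpmul2l _ E1) _; first by rewrite lee_fin ltW.
  by rewrite -EFinM mulrA mulfV ?mul1r // gt_eqF.
- by rewrite -addeA -EFinD addye ?leey.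
- by have := Gub y0 Xy0; rewrite leeNy_eq.
Qed.
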